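(* Let $G$ be a connected graph on $n\ge 2$ vertices with Wiener index $W(G)$. Then $\gamma(G)\le \dfrac{n^2}{2W(G)}$, with equality if and only if $G$ is transmission-regular.
   Context: For a finite simple undirected graph $G$ with $n$ vertices, let $\mathcal{F}=\{x\in\mathbb{R}^{V(G)} : \sum_{v} x_v = 0,\ \|x\|_\infty = 1\}$, for $x\in\mathcal{F}$ let $\gamma_x(G)=\max_{uv\in E(G)}|x_u-x_v|$, and $\gamma(G)=\min_{x\in\mathcal{F}}\gamma_x(G)$. For a connected graph, $d(u,v)$ is shortest-path distance, $\operatorname{tr}(u)=\sum_v d(u,v)$, and $W(G)=\sum_{\{u,v\}}d(u,v)=\frac12\sum_u\operatorname{tr}(u)$ (sum over unordered pairs). $G$ is transmission-regular if all vertices have the same transmission. *)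

(* Defs.v *)
From HB Require Import structures.
From mathcomp Require Import all_boot all_order all_algebra.
From mathcomp Require Import classical_sets reals.
Set Implicit Arguments. Unset Strict Implicit. Unset Printing Implicit Defensive.
Import Order.TTheory GRing.Theory Num.Theory.
Local Open Scope ring_scope.
Local Open Scope classical_set_scope.

Definition simple_graph (T : finType) (e : rel T) : Prop :=
  symmetric e /\ irreflexive e.

Definition connected_graph (T : finType) (e : rel T) : Prop :=
  forall u v : T, connect e u v.

Definition walk_k (T : finType) (e : rel T) (k : nat) (u v : T) : bool :=
  [exists p : k.-tuple T, path e u p && (last u p == v)].

(* shortest-path distance: least k with a walk of length k from u to v.
   Searched in [0, #|T|); in a connected graph the distance is <= #|T|-1,
   so this is exactly the graph distance. *)
Definition dist (T : finType) (e : rel T) (u v : T) : nat :=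
  find (fun k => walk_k e k u v) (iota 0 #|T|).

Definition transmission (T : finType) (e : rel T) (u : T) : nat :=
  (\sum_(v : T) dist e u v)%N.

(* Wiener index W(G) = (1/2) sum_u tr(u) = sum over unordered pairs *)
Definition wiener (R : realType) (T : finType) (e : rel T) : R :=
  (\sum_(u : T) (transmission e u)%:R) / 2.

Definition transmission_regular (T : finType) (e : rel T) : Prop :=
  forall u v : T, transmission e u = transmission e v.

Definition sup_norm (R : realType) (T : finType) (x : T -> R) : R :=
  \big[Num.max/0]_(v : T) `|x v|.

Definition feasible (R : realType) (T : finType) (x : T -> R) : Prop :=
  \sum_(v : T) x v = 0 /\ sup_norm x = 1.

Definition gamma_x (R : realType) (T : finType) (e : rel T) (x : T -> R) : R :=
  \big[Num.max/0]_(p : T * T | e p.1 p.2) `|x p.1 - x p.2|.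

(* gamma(G) = min_{x in F} gamma_x(G), taken as the infimum (the minimum
   is attained by compactness). *)
Definition gamma (R : realType) (T : finType) (e : rel T) : R :=
  inf [set g : R | exists x : T -> R, feasible x /\ g = gamma_x e x].

(* Main.v *)
Require Import Defs.
From mathcomp Require Import all_boot all_order all_algebra.
From mathcomp Require Import classical_sets reals lra.
Import Order.TTheory GRing.Theory Num.Theory.
Local Open Scope ring_scope.

Section G.
Variables (R : realType) (T : finType) (e : rel T).

Lemma walk_kP k u v :
  reflect (exists p : seq T, [/\ size p = k, path e u p & last u p = v])
          (walk_k e k u v).
Proof.
apply: (iffP existsP) => [[p /andP[pp /eqP lp]]|[p [sp pp lp]]].
  by exists (tval p); rewrite size_tuple.
have sp' : size p == k by apply/eqP.
by exists (Tuple sp'); rewrite /= pp lp eqxx.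
Qed.

Hypothesis conn : connected_graph e.

Lemma walk_exists u v : exists2 k, (k < #|T|)%N & walk_k e k u v.
Proof.
have /connectP [p pp lp] := conn u v.
move: lp; case: (shortenP pp) => p' pp' up' _ lp.
exists (size p'); last first.
  by apply/walk_kP; exists p'; split => //; rewrite lp.
have /card_uniqP cs := up'.
by have := max_card (mem (u :: p')); rewrite cs /=.
Qed.

Lemma dist_walk u v : walk_k e (dist e u v) u v /\ (dist e u v < #|T|)%N.
Proof.
have [k kN wk] := walk_exists u v.
have hs : has (fun k => walk_k e k u v) (iota 0 #|T|).
  by apply/hasP; exists k => //; rewrite mem_iota.
have hl := hs; rewrite has_find size_iota in hl.
by have := nth_find 0%N hs; rewrite /dist nth_iota // add0n.
Qed.

Lemma dist_le u v k : walk_k e k u v -> (k < #|T|)%N -> (dist e u v <= k)%N.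
Proof.
move=> wk kN; rewrite leqNgt; apply/negP => /(before_find 0%N).
by rewrite nth_iota // add0n wk.
Qed.

Lemma dist_edge u a b : e a b -> (dist e u b <= (dist e u a).+1)%N.
Proof.
move=> eab; have [w1 _] := dist_walk u a.
have [_ dN] := dist_walk u b.
case: (ltnP (dist e u a).+1 #|T|) => h; last by apply: leq_trans (ltnW dN) h.
apply: dist_le h; move/walk_kP: w1 => [p [sp pp lp]].
apply/walk_kP; exists (rcons p b); split.
- by rewrite size_rcons sp.
- by rewrite rcons_path pp lp.
- by rewrite last_rcons.
Qed.

Lemma dist_ge1 u v : u != v -> (1 <= dist e u v)%N.
Proof.
move=> uv; have [w _] := dist_walk u v; rewrite lt0n; apply/negP => /eqP d0.
move: w; rewrite d0 => /walk_kP [p [sp _ lp]].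
by move: sp lp => /size0nil -> /= /eqP; rewrite (negbTE uv).
Qed.


Lemma path_lip (x : T -> R) g :
  (forall a b, e a b -> `|x a - x b| <= g) ->
  forall v p, path e v p -> `|x v - x (last v p)| <= g * (size p)%:R.
Proof.
move=> hg v p; elim: p v => [|y p IH] v /=.
  by move=> _; rewrite subrr normr0 mulr0.
move=> /andP[evy pp].
have h1 := hg _ _ evy; have h2 := IH _ pp.
rewrite -addn1 natrD mulrDr mulr1.
have := ler_normD (x v - x y) (x y - x (last y p)).
rewrite addrA subrK => h3; lra.
Qed.

Lemma gamma_x_edge (x : T -> R) a b : e a b -> `|x a - x b| <= gamma_x e x.
Proof. move=> eab; rewrite /gamma_x. apply: (@le_bigmax_cond _ _ _ _ (a, b)). done. Qed.

Lemma gamma_x_ge0 (x : T -> R) : 0 <= gamma_x e x.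
Proof. exact: bigmax_ge_id. Qed.

Lemma sup_norm_attained (x : T -> R) (v0 : T) :
  exists w, `|x w| = sup_norm x.
Proof.
have [w _ hw] := eq_bigmax v0 predT (fun v => `|x v|) isT (fun i _ => normr_ge0 (x i)).
by exists w; rewrite /sup_norm hw.
Qed.

Lemma le_sup_norm (x : T -> R) w : `|x w| <= sup_norm x.
Proof. rewrite /sup_norm; exact: (@le_bigmax_cond _ _ _ _ w). Qed.


Lemma feasible_lb (x : T -> R) (v0 : T) : feasible x ->
  exists v, #|T|%:R <= gamma_x e x * (transmission e v)%:R.
Proof.
move=> [sx nx]; have [v hv] := sup_norm_attained x v0; rewrite nx in hv.
exists v; set g := gamma_x e x.
have key : forall w, x v * (x v - x w) <= g * (dist e v w)%:R.
  move=> w; have [wk _] := dist_walk v w; move/walk_kP: wk => [p [sp pp lp]].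
  have := @path_lip x g (fun a b h => @gamma_x_edge x a b h) v p pp; rewrite lp sp => h.
  apply: le_trans h; apply: le_trans (ler_norm _) _.
  by rewrite normrM hv mul1r.
have eq1 : \sum_w x v * (x v - x w) = #|T|%:R.
  under eq_bigr do rewrite mulrBr.
  rewrite sumrB sumr_const -mulr_sumr sx mulr0 subr0.
  by rewrite -expr2 -real_normK ?num_real // hv expr1n.
rewrite /transmission natr_sum mulr_sumr -eq1.
by apply: ler_sum => w _; exact: key.
Qed.

Lemma dist0 u : (0 < #|T|)%N -> dist e u u = 0%N.
Proof.
move=> n0; apply/eqP; rewrite -leqn0; apply: dist_le n0.
by apply/walk_kP; exists [::].
Qed.

Lemma upper (u : T) : symmetric e -> (0 < transmission e u)%N ->
  exists z : T -> R, feasible z /\ gamma_x e z <= #|T|%:R / (transmission e u)%:R.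
Proof.
move=> sym tpos.
have nN : (0 < #|T|)%N by apply/card_gt0P; exists u.
set n : R := #|T|%:R; set t : R := (transmission e u)%:R.
have n0 : 0 < n by rewrite ltr0n.
have t0 : 0 < t by rewrite ltr0n.
pose y w := (dist e u w)%:R - t / n.
have [w0 hw0] := sup_norm_attained y u; set M := sup_norm y in hw0.
have hM : t / n <= M.
  have := le_sup_norm y u; rewrite /y dist0 // sub0r normrN.
  by rewrite ger0_norm // divr_ge0 // ltW.
have M0 : 0 < M by apply: lt_le_trans hM; exact: divr_gt0.
exists (fun w => y w / M); split; [split|].
- rewrite -mulr_suml /y sumrB sumr_const -natr_sum.
  have -> : t / n *+ #|T| = t by rewrite -mulr_natr -/n divfK // gt_eqF.
  by rewrite subrr mul0r.
- apply/le_anti/andP; split.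
    apply: bigmax_le => // w _.
    by rewrite normrM [`|M^-1|]gtr0_norm ?invr_gt0 // ler_pdivrMr // mul1r le_sup_norm.
  rewrite /sup_norm; apply: (bigmax_sup w0) => //.
  by rewrite normrM [`|M^-1|]gtr0_norm ?invr_gt0 // hw0 divff // gt_eqF.
- apply: (@le_trans _ _ (1 / M)).
    apply: bigmax_le => [|[a b] /= eab]; first by rewrite divr_ge0 // ltW.
    rewrite -mulrBl normrM [`|M^-1|]gtr0_norm ?invr_gt0 // ler_pdivrMr //.
    rewrite divfK ?gt_eqF // /y opprB addrA subrK.
    have h1 := dist_edge u a b eab.
    have h2 : (dist e u a <= (dist e u b).+1)%N by apply: (dist_edge u b a); rewrite sym.
    have r1 : (dist e u b)%:R <= (dist e u a)%:R + 1 :> R.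
      by rewrite -[1]/(1%:R) -natrD ler_nat addn1.
    have r2 : (dist e u a)%:R <= (dist e u b)%:R + 1 :> R.
      by rewrite -[1]/(1%:R) -natrD ler_nat addn1.
    rewrite ler_norml; apply/andP; split; lra.
  move: hM; rewrite ler_pdivrMr // => hM.
  by rewrite ler_pdivlMr // mul1r mulrC ler_pdivrMr // mulrC.
Qed.

End G.
Arguments dist_ge1 {T e}.
Arguments upper {R T e}.
Arguments feasible_lb {R T e}.
Arguments gamma_x_ge0 {R T e}.

Lemma key_le (R : realType) (n t S : R) : 0 < n -> 0 < t -> 0 < S ->
  (n / t <= n ^+ 2 / S) = (S <= n * t).
Proof.
move=> n0 t0 S0.
by rewrite ler_pdivlMr // mulrAC ler_pdivrMr // expr2 -mulrA ler_pM2l.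
Qed.

Lemma key_lt (R : realType) (n t S : R) : 0 < n -> 0 < t -> 0 < S ->
  (n / t < n ^+ 2 / S) = (S < n * t).
Proof.
move=> n0 t0 S0.
by rewrite ltr_pdivlMr // mulrAC ltr_pdivrMr // expr2 -mulrA ltr_pM2l.
Qed.

Theorem theorem4p2 (R : realType) (T : finType) (e : rel T) :
  simple_graph e -> connected_graph e -> (2 <= #|T|)%N ->
  gamma R e <= (#|T|%:R ^+ 2) / (2 * wiener R e) /\
  (gamma R e = (#|T|%:R ^+ 2) / (2 * wiener R e) <-> transmission_regular e).
Proof.
move=> [sym irr] conn n2.
have nN : (0 < #|T|)%N by apply: ltnW.
have [u hu] := bigop.eq_bigmax (transmission e) nN.
have tmax : forall w, (transmission e w <= transmission e u)%N.
  by move=> w; rewrite -hu leq_bigmax.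
have tpos : (0 < transmission e u)%N.
  have [a [b [_ _ ab]]] := card_gt1P n2.
  have [w uw] : exists w, u != w.
    case: (eqVneq u a) => [ua|]; last by exists a.
    by exists b; rewrite ua.
  have h1 := dist_ge1 conn u w uw. apply: leq_trans h1 _.
  by rewrite /transmission (bigD1 w) //= leq_addr.
set n : R := #|T|%:R; set t : R := (transmission e u)%:R.
set S : R := \sum_w (transmission e w)%:R.
have n0 : 0 < n by rewrite ltr0n.
have t0 : 0 < t by rewrite ltr0n.
have W2 : 2 * wiener R e = S.
  by rewrite /wiener mulrC divfK // pnatr_eq0.
rewrite W2.
have [z [fz gz]] := upper (R:=R) conn u sym tpos.
set E := [set g : R | exists x : T -> R, feasible x /\ g = gamma_x e x]%classic.
have hlb : has_lbound E.
  by exists 0 => g [x [_ ->]]; exact: gamma_x_ge0.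
have Ez : E (gamma_x e z) by exists z.
have g1 : gamma R e <= n / t by apply: le_trans (ge_inf hlb Ez) gz.
have S0 : 0 < S.
  apply: (lt_le_trans t0); rewrite /S (bigD1 u) //= lerDl.
  by apply: sumr_ge0 => w _; exact: ler0n.
have Sle : S <= n * t.
  rewrite mulrC mulr_natr -sumr_const /S; apply: ler_sum => w _.
  by rewrite ler_nat.
have g2 : gamma R e <= n ^+ 2 / S by apply: le_trans g1 _; rewrite key_le.
split => //; split.
- move=> geq.
  have allu : forall w, transmission e w = transmission e u.
    move=> w; have := tmax w; rewrite leq_eqVlt => /orP [/eqP //| lt].
    have Slt : S < n * t.
      rewrite mulrC mulr_natr -sumr_const /S (bigD1 w) //=.
      rewrite [X in _ < X](bigD1 w) //=; apply: ltr_leD; first by rewrite ltr_nat.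
      by apply: ler_sum => v _; rewrite ler_nat.
    have : n / t < n ^+ 2 / S by rewrite key_lt.
    by rewrite -geq ltNge g1.
  by move=> a b; rewrite !allu.
- move=> reg; apply/le_anti; rewrite g2 /=.
  have SE : S = n * t.
    rewrite /S (eq_bigr (fun _ => t)); last by move=> w _; rewrite /t (reg w u).
    by rewrite sumr_const -mulr_natr mulrC.
  apply: lb_le_inf; first by exists (gamma_x e z).
  move=> g [x [fx ->]].
  have [v hv] := feasible_lb conn x u fx.
  rewrite SE expr2 -mulf_div divff ?gt_eqF // mul1r ler_pdivrMr //.
  by rewrite /t -(reg v u).
Qed.
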